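(* Let $n\ge1$ and $\gamma=0$ (so $\beta=1$). Consider the problem of finding $\ell,R>0$ and $U:[0,R]\to[0,\infty)$, continuous on $[0,R]$ and $C^2$ on $[0,R)$, such that $$U''+\Big(\frac{n-1}{r}-\frac r2\Big)U'+\frac12U=0\ \text{ in }(0,R),\quad U(0)=\ell,\ U'(0)=0,\quad U(R)=0,\ U'(R)=-\sqrt2.$$ This problem has exactly one solution $(\ell,R,U)$, given by $U(r)=\ell\,\mathbf M(-\tfrac12,\tfrac n2,\tfrac{r^2}{4})$, $R=2\sqrt{s_\star}$ and $\frac1\ell=-\sqrt{\frac{s_\star}{2}}\,\frac{d}{ds}\mathbf M(-\tfrac12,\tfrac n2,s)\big|_{s=s_\star}$, where $s_\star>0$ is the unique positive zero of $s\mapsto\mathbf M(-\tfrac12,\tfrac n2,s)$.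
   Context: $\mathbf M(a,b,s)=\sum_{k\ge0}\frac{(a)_k}{(b)_k}\frac{s^k}{k!}$ is Kummer's confluent hypergeometric function ($(a)_k$ the Pochhammer symbol). $U'(R)$ is the left derivative at $R$. (This is the profile equation for radial self-similar solutions $u(x,t)=|t|^{\beta/2}U(|t|^{-1/2}|x|)$, $t<0$, with $U$ extended by zero for $r\ge R$.) *)

(* Defs.v *)
From Stdlib Require Import Reals.
From Coquelicot Require Import Coquelicot.
Open Scope R_scope.

Fixpoint poch (a : R) (k : nat) : R :=
  match k with
  | O => 1
  | S k' => poch a k' * (a + INR k')
  end.

Definition kummerM (a b s : R) : R :=
  Series (fun k => poch a k / poch b k * s ^ k / INR (Factorial.fact k)).

Definition continuous_on (D : R -> Prop) (f : R -> R) : Prop :=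
  forall r, D r -> filterlim f (within D (locally r)) (locally (f r)).

Definition derivative_on (D : R -> Prop) (f f' : R -> R) : Prop :=
  forall r, D r ->
    filterlim (fun x => (f x - f r) / (x - r))
              (within (fun x => D x /\ x <> r) (locally r)) (locally (f' r)).

(* U is continuous on [0,R], C^2 on [0,R) (one-sided at 0) with first and
   second derivatives U1, U2; U'(R) is the left derivative at R. *)
Definition profile_solution (n : nat) (ell Rr : R) (U : R -> R) : Prop :=
  0 < ell /\ 0 < Rr /\
  (forall r, 0 <= r <= Rr -> 0 <= U r) /\
  continuous_on (fun r => 0 <= r <= Rr) U /\
  (exists U1 U2 : R -> R,
     derivative_on (fun r => 0 <= r < Rr) U U1 /\
     derivative_on (fun r => 0 <= r < Rr) U1 U2 /\
     continuous_on (fun r => 0 <= r < Rr) U2 /\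
     (forall r, 0 < r < Rr ->
        U2 r + ((INR n - 1) / r - r / 2) * U1 r + U r / 2 = 0) /\
     U 0 = ell /\ U1 0 = 0) /\
  U Rr = 0 /\
  filterlim (fun x => (U x - U Rr) / (x - Rr))
            (within (fun x => 0 <= x < Rr) (locally Rr)) (locally (- sqrt 2)).

(* Main.v *)
Require Import Defs.
From Stdlib Require Import Reals Lra Lia Psatz.
From Coquelicot Require Import Coquelicot.
Open Scope R_scope.

Lemma poch_pos b k : 0 < b -> 0 < poch b k.
Proof. intros Hb; induction k; simpl; [lra|]. apply Rmult_lt_0_compat; auto. pose proof (pos_INR k); lra. Qed.

Lemma poch_neg k : poch (-1/2) (S k) < 0.
Proof. induction k; simpl in *; [lra|]. 
  assert (0 < -1/2 + INR (S k)) by (rewrite S_INR; pose proof (pos_INR k); lra).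
  simpl in H. nra. Qed.

Lemma poch_nz k : poch (-1/2) k <> 0.
Proof. destruct k. simpl; lra. pose proof (poch_neg k); lra. Qed.

Definition cK (b : R) (k : nat) : R := poch (-1/2) k / poch b k / INR (Factorial.fact k).

Lemma cK_nz b k : 0 < b -> cK b k <> 0.
Proof. intros Hb; unfold cK. pose proof (poch_nz k). pose proof (poch_pos b k Hb).
  pose proof (INR_fact_lt_0 k). apply Rmult_integral_contrapositive; split;
  [apply Rmult_integral_contrapositive; split|]; auto; apply Rinv_neq_0_compat; lra. Qed.

Lemma cK_neg b k : 0 < b -> cK b (S k) < 0.
Proof. intros Hb; unfold cK. pose proof (poch_neg k). pose proof (poch_pos b (S k) Hb).
  pose proof (INR_fact_lt_0 (S k)). unfold Rdiv. 
  assert (0 < / poch b (S k)) by (apply Rinv_0_lt_compat; lra).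
  assert (0 < / INR (Factorial.fact (S k))) by (apply Rinv_0_lt_compat; lra). 
  assert (poch (-1/2) (S k) * / poch b (S k) < 0) by nra. nra. Qed.

Lemma cK_S b k : 0 < b -> cK b (S k) = cK b k * ((-1/2 + INR k) / ((b + INR k) * INR (S k))).
Proof. intros Hb; unfold cK. pose proof (poch_pos b k Hb). 
  assert (0 < b + INR k) by (pose proof (pos_INR k); lra).
  pose proof (INR_fact_lt_0 k). 
  assert (0 < INR (S k)) by (apply lt_0_INR; lia).
  change (Factorial.fact (S k)) with (S k * Factorial.fact k)%nat. rewrite mult_INR. simpl poch.
  field. repeat split; lra. Qed.

Lemma kummer_PS b s : 0 < b -> kummerM (-1/2) b s = PSeries (cK b) s.
Proof. intros Hb. unfold kummerM, PSeries. apply Series_ext. intros k. unfold cK.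
  pose proof (poch_pos b k Hb). pose proof (INR_fact_lt_0 k). field. split; lra. Qed.

Lemma cK_radius b : 1/2 <= b -> CV_radius (cK b) = p_infty.
Proof. intros Hb0. assert (Hb : 0 < b) by lra. apply CV_radius_infinite_DAlembert. intros; apply cK_nz; auto.
  apply is_lim_seq_le_le with (u := fun _ => 0) (w := fun k => / (INR k + 1)).
  - intros k. rewrite cK_S by auto. 
    assert (cK b k <> 0) by (apply cK_nz; auto).
    assert (0 < b + INR k) by (pose proof (pos_INR k); lra).
    assert (0 < INR (S k)) by (apply lt_0_INR; lia).
    rewrite S_INR in *.
    replace (cK b k * ((-1 / 2 + INR k) / ((b + INR k) * (INR k + 1))) / cK b k)
      with ((-1 / 2 + INR k) / ((b + INR k) * (INR k + 1))) by (field; lra).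
    split. apply Rabs_pos.
    rewrite Rabs_div by nra. rewrite (Rabs_right ((b + INR k) * (INR k + 1))) by nra.
    apply Rmult_le_reg_r with ((b + INR k) * (INR k + 1)). nra.
    unfold Rdiv. rewrite Rmult_assoc, Rinv_l by nra. rewrite Rmult_1_r.
    replace (/ (INR k + 1) * ((b + INR k) * (INR k + 1))) with (b + INR k) by (field; lra).
    apply Rabs_le. pose proof (pos_INR k). constructor; lra.
  - apply is_lim_seq_const.
  - replace (Finite 0) with (Rbar_inv p_infty) by reflexivity.
    apply is_lim_seq_inv. eapply is_lim_seq_plus. apply is_lim_seq_INR. apply is_lim_seq_const.
    simpl; reflexivity. discriminate.
Qed.
Section Kum.
Variable b : R.
Hypothesis Hb0 : 1/2 <= b.
Let Hb : 0 < b. Proof. lra. Qed.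

Definition c0 := cK b.
Definition c1 := PS_derive c0.
Definition c2 := PS_derive c1.
Definition c3 := PS_derive c2.
Definition M s := PSeries c0 s.
Definition M1 s := PSeries c1 s.
Definition M2 s := PSeries c2 s.

Lemma rad0 : CV_radius c0 = p_infty. Proof. apply cK_radius; auto. Qed.
Lemma rad1 : CV_radius c1 = p_infty. Proof. unfold c1; rewrite CV_radius_derive; apply rad0. Qed.
Lemma rad2 : CV_radius c2 = p_infty. Proof. unfold c2; rewrite CV_radius_derive; apply rad1. Qed.
Lemma rad3 : CV_radius c3 = p_infty. Proof. unfold c3; rewrite CV_radius_derive; apply rad2. Qed.

Lemma M_der s : is_derive M s (M1 s).
Proof. apply is_derive_PSeries. rewrite rad0; simpl; auto. Qed.
Lemma M1_der s : is_derive M1 s (M2 s).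
Proof. apply is_derive_PSeries. rewrite rad1; simpl; auto. Qed.
Lemma M2_der s : is_derive M2 s (PSeries c3 s).
Proof. apply is_derive_PSeries. rewrite rad2; simpl; auto. Qed.

Lemma ex_ps a s : CV_radius a = p_infty -> ex_pseries a s.
Proof. intros H; apply CV_radius_inside; rewrite H; simpl; auto. Qed.

Lemma kummer_eq s : s * M2 s + (b - s) * M1 s + M s / 2 = 0.
Proof.
  unfold M, M1, M2.
  rewrite <- PSeries_incr_1.
  replace ((b - s) * PSeries c1 s) with (PSeries (PS_scal b c1) s + PSeries (PS_scal (-1) (PS_incr_1 c1)) s)
    by (rewrite !PSeries_scal, PSeries_incr_1; unfold scal; simpl; unfold mult; simpl; ring).
  replace (PSeries c0 s / 2) with (PSeries (PS_scal (1/2) c0) s)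
    by (rewrite PSeries_scal; unfold scal; simpl; unfold mult; simpl; field).
  assert (E1 : forall a, CV_radius a = p_infty -> ex_pseries (PS_incr_1 a) s).
  { intros a Ha. apply ex_ps. rewrite CV_radius_incr_1. auto. }
  assert (E2 : forall c a, CV_radius a = p_infty -> ex_pseries (PS_scal c a) s).
  { intros c a Ha. apply ex_pseries_scal. unfold mult; simpl; apply Rmult_comm. apply ex_ps; auto. }
  assert (E3 : forall c a, CV_radius a = p_infty -> ex_pseries (PS_scal c (PS_incr_1 a)) s).
  { intros c a Ha. apply E2. rewrite CV_radius_incr_1; auto. }
  rewrite <- !PSeries_plus.
  2: apply ex_pseries_plus; [apply E1, rad2 | apply ex_pseries_plus; [apply E2, rad1 | apply E3, rad1]].
  2: apply E2, rad0. 2: apply E1, rad2. 2: apply ex_pseries_plus; [apply E2, rad1| apply E3, rad1].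
  2: apply E2, rad1. 2: apply E3, rad1.
  rewrite (PSeries_ext _ (PS_scal 0 c0)).
  { rewrite PSeries_scal. unfold scal; simpl; unfold mult; simpl; ring. }
  intros k. unfold PS_plus, PS_scal, PS_incr_1, scal, plus, zero; simpl; unfold mult, plus; simpl.
  unfold c2, c1, PS_derive. destruct k.
  - unfold c0, cK. simpl. field. lra.
  - unfold c0. rewrite (cK_S b (S k)) by auto. rewrite (cK_S b k) by auto.
    rewrite !S_INR. 
    assert (0 < INR k + 1) by (pose proof (pos_INR k); lra).
    assert (0 < b + (INR k + 1)) by lra.
    assert (0 < b + INR k) by (pose proof (pos_INR k); lra).
    field. lra.
Qed.
End Kum.

Lemma Series_zero : Series (fun _ => 0) = 0.
Proof. rewrite (Series_ext _ (fun n => 0 * 0)) by (intros; ring). rewrite Series_scal_l. ring. Qed.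

Lemma cont_of_der f f' x : is_derive f x f' -> continuity_pt f x.
Proof. intros H. apply derivable_continuous_pt. exists f'. apply is_derive_Reals; auto. Qed.

Section Mono.
Variable b : R.
Hypothesis Hb0 : 1/2 <= b.
Let Hb : 0 < b. Proof. lra. Qed.

Lemma M_0 : M b 0 = 1.
Proof. unfold M. rewrite PSeries_0. unfold c0, cK. simpl. field. Qed.

Lemma M1_le s : 0 <= s -> M1 b s <= - / (2 * b).
Proof. intros Hs. unfold M1, PSeries.
  assert (Hex : ex_series (fun k => c1 b k * s ^ k)).
  { apply ex_pseries_R. apply ex_ps. apply rad1; auto. }
  rewrite Series_incr_1 by auto.
  assert (Hc : c1 b 0 = - / (2 * b)). { unfold c1, c0, PS_derive, cK. simpl. field. lra. }
  rewrite Hc. simpl pow. 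
  assert (Series (fun k => c1 b (S k) * s ^ S k) <= 0).
  { rewrite <- (Ropp_involutive (Series _)). rewrite <- Series_opp.
    assert (0 <= Series (fun n => - (c1 b (S n) * s ^ S n))).
    { rewrite <- Series_zero. apply Series_le.
      - intros k. split; [lra|]. unfold c1, PS_derive.
        pose proof (cK_neg b (S k) Hb). pose proof (pos_INR (S (S k))).
        pose proof (pow_le s (S k) Hs). 
        assert (INR (S (S k)) * cK b (S (S k)) <= 0) by nra. unfold c0. nra.
      - apply (ex_series_opp (fun n => c1 b (S n) * s ^ S n)).
        apply (ex_series_incr_1 (fun n => c1 b n * s ^ n)). auto. }
    lra. }
  simpl pow in H. lra.
Qed.

Lemma M_decr x y : 0 <= x -> x < y -> M b y < M b x.
Proof. intros Hx Hxy.
  destruct (MVT_gen (M b) x y (M1 b)) as [c [Hc Heq]].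
  - intros; apply M_der; auto.
  - intros; eapply cont_of_der; apply M_der; auto.
  - rewrite Rmin_left, Rmax_right in Hc by lra.
    pose proof (M1_le c ltac:(lra)). 
    assert (0 < / (2*b)) by (apply Rinv_0_lt_compat; lra). nra.
Qed.

Lemma M_upper s : 0 <= s -> M b s <= 1 - s / (2 * b).
Proof. intros Hs.
  destruct (MVT_gen (M b) 0 s (M1 b)) as [c [Hc Heq]].
  - intros; apply M_der; auto.
  - intros; eapply cont_of_der; apply M_der; auto.
  - rewrite Rmin_left, Rmax_right in Hc by lra. rewrite M_0 in Heq.
    pose proof (M1_le c ltac:(lra)). 
    replace (s / (2*b)) with (/ (2*b) * s) by (field; lra). nra.
Qed.

Lemma M_zero : exists s, 0 < s /\ M b s = 0.
Proof.
  destruct (IVT_gen (M b) 0 (4*b) 0) as [x [Hx Hm]].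
  - intros x; eapply cont_of_der; apply M_der; auto.
  - rewrite M_0. pose proof (M_upper (4*b) ltac:(lra)).
    replace (4 * b / (2 * b)) with 2 in H by (field; lra).
    rewrite Rmin_right, Rmax_left by lra. lra.
  - exists x. rewrite Rmin_left, Rmax_right in Hx by lra. split; auto.
    destruct Hx as [Hx _]. destruct Hx as [Hx|Hx]; auto. subst. rewrite M_0 in Hm. lra.
Qed.

End Mono.

Lemma ball_R (x e y : R) : ball x e y <-> Rabs (y - x) < e.
Proof. change (@AbsRing_ball R_AbsRing x e y <-> Rabs (y - x) < e). unfold AbsRing_ball, abs, minus, plus, opp; simpl. tauto. Qed.

Lemma der_within f r l (D : R -> Prop) : derivable_pt_lim f r l ->
  filterlim (fun x => (f x - f r) / (x - r)) (within (fun x => D x /\ x <> r) (locally r)) (locally l).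
Proof. intros H. apply filterlim_locally. intros eps.
  destruct (H eps (cond_pos eps)) as [d Hd]. unfold within. exists d. intros y Hy [HD Hne].
  apply ball_R in Hy. apply ball_R. specialize (Hd (y - r) ltac:(lra) Hy).
  rewrite Rplus_minus in Hd. auto. Qed.

Lemma der_interior D f f' r (delta : R) : derivative_on D f f' -> 0 < delta ->
  (forall y, Rabs (y - r) < delta -> D y) -> derivable_pt_lim f r (f' r).
Proof. intros H Hd HD. assert (Dr : D r) by (apply HD; rewrite Rminus_diag, Rabs_R0; lra).
  specialize (H r Dr). intros eps Heps.
  pose proof (proj1 (filterlim_locally _ _) H (mkposreal eps Heps)) as Hl.
  unfold within in Hl. destruct Hl as [d0 Hd0].
  assert (Hm : 0 < Rmin d0 delta) by (apply Rmin_pos; [apply cond_pos| lra]).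
  exists (mkposreal _ Hm). intros h Hh Hlt. simpl in Hlt.
  assert (Hb : ball r d0 (r + h)). { apply ball_R. replace (r + h - r) with h by ring.
    pose proof (Rmin_l d0 delta). lra. }
  specialize (Hd0 (r + h) Hb). 
  assert (D (r + h) /\ r + h <> r).
  { split; [apply HD; replace (r + h - r) with h by ring; pose proof (Rmin_r d0 delta); lra | lra]. }
  specialize (Hd0 H0). pose proof (proj1 (ball_R _ _ _) Hd0) as Hd1; clear Hd0; rename Hd1 into Hd0. simpl in Hd0.
  replace (r + h - r) with h in Hd0 by ring. auto. Qed.

Lemma cont_within_of_der D f f' r : derivative_on D f f' -> D r ->
  forall eps, 0 < eps -> exists delta, 0 < delta /\ forall x, D x -> Rabs (x - r) < delta -> Rabs (f x - f r) < eps.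
Proof. intros H Dr eps Heps. specialize (H r Dr).
  pose proof (proj1 (filterlim_locally _ _) H (mkposreal 1 Rlt_0_1)) as Hl.
  unfold within in Hl. destruct Hl as [d0 Hd0].
  set (K := Rabs (f' r) + 1).
  assert (HK : 0 < K) by (unfold K; pose proof (Rabs_pos (f' r)); lra).
  assert (Hm : 0 < Rmin d0 (eps / K)) by (apply Rmin_pos; [apply cond_pos| apply Rdiv_lt_0_compat; lra]).
  exists (Rmin d0 (eps / K)). split; auto. intros x Dx Hx.
  destruct (Req_dec x r) as [E|Ne]. { subst. rewrite Rminus_diag, Rabs_R0. lra. }
  assert (Hb : ball r d0 x). { apply ball_R. pose proof (Rmin_l d0 (eps/K)). lra. }
  specialize (Hd0 x Hb (conj Dx Ne)). pose proof (proj1 (ball_R _ _ _) Hd0) as Hd1; clear Hd0; rename Hd1 into Hd0. simpl in Hd0.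
  assert (Hq : Rabs ((f x - f r) / (x - r)) < K).
  { unfold K. pose proof (Rabs_triang_inv ((f x - f r) / (x - r)) (f' r)). lra. }
  replace (f x - f r) with ((f x - f r) / (x - r) * (x - r)) by (field; lra).
  rewrite Rabs_mult. 
  assert (Rabs (x - r) < eps / K) by (pose proof (Rmin_r d0 (eps/K)); lra).
  assert (0 <= Rabs (x - r)) by apply Rabs_pos.
  apply Rle_lt_trans with (K * Rabs (x - r)). 
  { apply Rmult_le_compat_r; lra. }
  replace eps with (K * (eps / K)) by (field; lra). apply Rmult_lt_compat_l; lra. Qed.

Lemma cont_on_eps D f r : continuous_on D f -> D r ->
  forall eps, 0 < eps -> exists delta, 0 < delta /\ forall x, D x -> Rabs (x - r) < delta -> Rabs (f x - f r) < eps.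
Proof. intros H Dr eps Heps. specialize (H r Dr).
  pose proof (proj1 (filterlim_locally _ _) H (mkposreal eps Heps)) as Hl.
  unfold within in Hl. destruct Hl as [d0 Hd0]. exists d0. split; [apply cond_pos|].
  intros x Dx Hx. assert (Hb : ball r d0 x) by (apply ball_R; auto).
  specialize (Hd0 x Hb Dx). apply ball_R in Hd0. auto. Qed.

Lemma der_on_global D f f' : (forall r, derivable_pt_lim f r (f' r)) -> derivative_on D f f'.
Proof. intros H r _. apply der_within; auto. Qed.

Lemma cont_on_global D f : (forall r, continuity_pt f r) -> continuous_on D f.
Proof. intros H r _. eapply filterlim_filter_le_1. apply filter_le_within.
  apply continuity_pt_filterlim; auto. Qed.

Section Vsec.
Variable b : R.
Hypothesis Hb0 : 1/2 <= b.

Definition V r := M b (r ^ 2 / 4).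
Definition V1 r := M1 b (r ^ 2 / 4) * (r / 2).
Definition V2 r := M2 b (r ^ 2 / 4) * (r / 2) * (r / 2) + M1 b (r ^ 2 / 4) / 2.

Lemma g_der r : is_derive (fun x => x ^ 2 / 4) r (r / 2).
Proof. auto_derive; auto. field. Qed.

Lemma V_der r : is_derive V r (V1 r).
Proof. pose proof (is_derive_comp (M b) (fun x => x ^ 2 / 4) r _ _ (M_der b Hb0 _) (g_der r)) as H.
  unfold V, V1. replace (M1 b (r ^ 2 / 4) * (r / 2)) with (scal (r / 2) (M1 b (r ^ 2 / 4))); auto.
  unfold scal; simpl; unfold mult; simpl; ring. Qed.

Lemma V1_der r : is_derive V1 r (V2 r).
Proof. pose proof (is_derive_comp (M1 b) (fun x => x ^ 2 / 4) r _ _ (M1_der b Hb0 _) (g_der r)) as H.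
  assert (H2 : is_derive (fun x : R => x / 2) r (1/2)) by (auto_derive; auto; field).
  pose proof (is_derive_mult _ _ r _ _ H H2 ltac:(intros; unfold mult; simpl; apply Rmult_comm)) as H3.
  unfold V1, V2.
  replace (M2 b (r ^ 2 / 4) * (r / 2) * (r / 2) + M1 b (r ^ 2 / 4) / 2)
    with (plus (mult (scal (r/2) (M2 b (r^2/4))) (r/2)) (mult (M1 b (r^2/4)) (1/2))).
  exact H3.
  unfold plus, mult, scal; simpl; unfold mult; simpl. field.
Qed.

Lemma V2_cont r : continuity_pt V2 r.
Proof. apply derivable_continuous_pt. apply ex_derive_Reals_0. unfold V2.
  auto_derive; repeat split; auto.
  - exists (PSeries (c3 b) (r * (r * 1) / 4)). apply M2_der; auto.
  - exists (M2 b (r * (r * 1) / 4)). apply M1_der; auto.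
Qed.

Lemma V_cont r : continuity_pt V r.
Proof. eapply cont_of_der; apply V_der. Qed.

Lemma V_ode (n : nat) r : b = INR n / 2 -> r <> 0 ->
  V2 r + ((INR n - 1) / r - r / 2) * V1 r + V r / 2 = 0.
Proof. intros Hbn Hr. pose proof (kummer_eq b Hb0 (r ^ 2 / 4)) as K.
  unfold V, V1, V2. rewrite <- K. rewrite Hbn. field. auto. Qed.

End Vsec.

Definition CW (D : R -> Prop) (f : R -> R) (r : R) : Prop :=
  forall eps, 0 < eps -> exists delta, 0 < delta /\ forall x, D x -> Rabs (x - r) < delta -> Rabs (f x - f r) < eps.

Lemma CW_sub D f g r : CW D f r -> CW D g r -> CW D (fun x => f x - g x) r.
Proof. intros Hf Hg eps He. destruct (Hf (eps/2) ltac:(lra)) as [d1 [Hd1 H1]].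
  destruct (Hg (eps/2) ltac:(lra)) as [d2 [Hd2 H2]].
  exists (Rmin d1 d2). split. apply Rmin_pos; auto. intros x Dx Hx.
  pose proof (Rmin_l d1 d2). pose proof (Rmin_r d1 d2).
  specialize (H1 x Dx ltac:(lra)). specialize (H2 x Dx ltac:(lra)).
  replace (f x - g x - (f r - g r)) with ((f x - f r) - (g x - g r)) by ring.
  pose proof (Rabs_triang (f x - f r) (- (g x - g r))). rewrite Rabs_Ropp in H3.
  unfold Rminus at 1. lra. Qed.

Lemma CW_scal D g c r : CW D g r -> CW D (fun x => c * g x) r.
Proof. intros Hg eps He. destruct (Hg (eps / (Rabs c + 1))) as [d [Hd H]].
  { apply Rdiv_lt_0_compat; auto. pose proof (Rabs_pos c); lra. }
  exists d; split; auto. intros x Dx Hx. specialize (H x Dx Hx).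
  replace (c * g x - c * g r) with (c * (g x - g r)) by ring. rewrite Rabs_mult.
  pose proof (Rabs_pos c). pose proof (Rabs_pos (g x - g r)).
  apply Rle_lt_trans with ((Rabs c + 1) * Rabs (g x - g r)). nra.
  replace eps with ((Rabs c + 1) * (eps / (Rabs c + 1))) by (field; lra).
  apply Rmult_lt_compat_l; lra. Qed.

Lemma CW_der D f f' r : derivative_on D f f' -> D r -> CW D f r.
Proof. intros H Dr eps He. eapply cont_within_of_der; eauto. Qed.

Lemma CW_cont D f r : continuous_on D f -> D r -> CW D f r.
Proof. intros H Dr eps He. eapply cont_on_eps; eauto. Qed.

Lemma eq_at_end f g R0 : 0 < R0 -> CW (fun x => 0 <= x <= R0) f R0 -> CW (fun x => 0 <= x <= R0) g R0 ->
  (forall x, 0 <= x < R0 -> f x = g x) -> f R0 = g R0.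
Proof. intros HR Hf Hg Heq. destruct (Req_dec (f R0) (g R0)) as [E|Ne]; auto. exfalso.
  set (eps := Rabs (f R0 - g R0) / 2).
  assert (He : 0 < eps) by (unfold eps; pose proof (Rabs_pos_lt _ (Rminus_eq_contra _ _ Ne)); lra).
  destruct (Hf eps He) as [d1 [Hd1 H1]]. destruct (Hg eps He) as [d2 [Hd2 H2]].
  set (m := Rmin d1 d2). assert (Hm : 0 < m) by (apply Rmin_pos; auto).
  pose proof (Rmin_l d1 d2) as Hm1. pose proof (Rmin_r d1 d2) as Hm2. fold m in Hm1, Hm2.
  set (x := Rmax 0 (R0 - m / 2)).
  assert (Hx1 : 0 <= x) by apply Rmax_l.
  assert (Hx2 : x < R0) by (unfold x; apply Rmax_lub_lt; lra).
  assert (Hx3 : Rabs (x - R0) < m).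
  { rewrite Rabs_left by lra. unfold x. destruct (Rle_dec 0 (R0 - m/2)).
    rewrite Rmax_right by lra. lra. rewrite Rmax_left by lra. lra. }
  specialize (H1 x ltac:(lra) ltac:(lra)). specialize (H2 x ltac:(lra) ltac:(lra)).
  rewrite (Heq x ltac:(lra)) in H1.
  pose proof (Rabs_triang (- (g x - f R0)) (g x - g R0)) as T. rewrite Rabs_Ropp in T.
  replace (- (g x - f R0) + (g x - g R0)) with (f R0 - g R0) in T by ring.
  unfold eps in *. lra. Qed.

Lemma lim_unique_left (q : R -> R) R0 l1 l2 : 0 < R0 ->
  filterlim q (within (fun x => 0 <= x < R0) (locally R0)) (locally l1) ->
  filterlim q (within (fun x => 0 <= x < R0) (locally R0)) (locally l2) -> l1 = l2.
Proof. intros HR H1 H2. destruct (Req_dec l1 l2) as [E|Ne]; auto. exfalso.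
  assert (He : 0 < Rabs (l1 - l2) / 2) by (pose proof (Rabs_pos_lt _ (Rminus_eq_contra _ _ Ne)); lra).
  pose proof (proj1 (filterlim_locally _ _) H1 (mkposreal _ He)) as A1.
  pose proof (proj1 (filterlim_locally _ _) H2 (mkposreal _ He)) as A2.
  unfold within in A1, A2. destruct A1 as [d1 B1]. destruct A2 as [d2 B2].
  set (m := Rmin d1 d2). assert (Hm : 0 < m) by (apply Rmin_pos; apply cond_pos).
  pose proof (Rmin_l d1 d2) as Hm1. pose proof (Rmin_r d1 d2) as Hm2. fold m in Hm1, Hm2.
  set (x := Rmax 0 (R0 - m / 2)).
  assert (Hx1 : 0 <= x) by apply Rmax_l.
  assert (Hx2 : x < R0) by (unfold x; apply Rmax_lub_lt; lra).
  assert (Hx3 : Rabs (x - R0) < m).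
  { rewrite Rabs_left by lra. unfold x. destruct (Rle_dec 0 (R0 - m/2)).
    rewrite Rmax_right by lra. lra. rewrite Rmax_left by lra. lra. }
  assert (b1 : ball R0 d1 x) by (apply ball_R; lra).
  assert (b2 : ball R0 d2 x) by (apply ball_R; lra).
  specialize (B1 x b1 (conj Hx1 Hx2)). specialize (B2 x b2 (conj Hx1 Hx2)).
  pose proof (proj1 (ball_R _ _ _) B1) as C1. pose proof (proj1 (ball_R _ _ _) B2) as C2. simpl in C1, C2.
  pose proof (Rabs_triang (- (q x - l1)) (q x - l2)) as T. rewrite Rabs_Ropp in T.
  replace (- (q x - l1) + (q x - l2)) with (l1 - l2) in T by ring. lra. Qed.

Lemma F_der (w w1 : R -> R) r dw dw1 C : is_derive w r dw -> is_derive w1 r dw1 ->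
  is_derive (fun x => (w1 x ^ 2 + w x ^ 2) * exp (- (C * x))) r
   ((2 * w1 r * dw1 + 2 * w r * dw) * exp (- (C * r)) - C * (w1 r ^ 2 + w r ^ 2) * exp (- (C * r))).
Proof. intros H H1. auto_derive.
  - split; [exists dw1; auto | split; [exists dw; auto | auto]].
  - replace (Derive (fun x : R => w x) r) with dw by (symmetry; apply is_derive_unique; auto).
    replace (Derive (fun x : R => w1 x) r) with dw1 by (symmetry; apply is_derive_unique; auto). simpl. ring. Qed.

Lemma nonincr_zero (F F' : R -> R) R0 r : 0 < r < R0 ->
  (forall x, 0 < x < R0 -> is_derive F x (F' x)) -> (forall x, 0 < x < R0 -> F' x <= 0) ->
  (forall eps, 0 < eps -> exists e, 0 < e < r /\ F e < eps) -> F r <= 0.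
Proof. intros Hr HD HF' Hs. destruct (Rle_dec (F r) 0) as [|Hn]; auto. exfalso.
  destruct (Hs (F r) ltac:(lra)) as [e [He HFe]].
  destruct (MVT_gen F e r F') as [c [Hc Heq]].
  - rewrite Rmin_left, Rmax_right by lra. intros; apply HD; lra.
  - rewrite Rmin_left, Rmax_right by lra. intros; eapply cont_of_der; apply HD; lra.
  - rewrite Rmin_left, Rmax_right in Hc by lra.
    assert (F' c <= 0) by (apply HF'; lra). nra. Qed.

Lemma bracket_le q x Rr a w : 0 <= q -> 0 < x < Rr ->
  (2 * a * (- (q - x / 2) * a - w / 2) + 2 * w * a) - (Rr + 1) * (a ^ 2 + w ^ 2) <= 0.
Proof. intros Hq Hx.
  assert (0 <= q * (a * a)) by (apply Rmult_le_pos; nra).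
  assert (0 <= (Rr - x) * (a * a)) by (apply Rmult_le_pos; nra).
  pose proof (Rle_0_sqr (w - a)) as S1. unfold Rsqr in S1.
  pose proof (Rle_0_sqr a) as S2. unfold Rsqr in S2.
  pose proof (Rle_0_sqr w) as S3. unfold Rsqr in S3.
  assert (0 <= Rr * (w * w)) by (apply Rmult_le_pos; lra).
  replace ((2 * a * (- (q - x / 2) * a - w / 2) + 2 * w * a) - (Rr + 1) * (a ^ 2 + w ^ 2))
    with (-2 * (q * (a * a)) - (Rr - x) * (a * a) - Rr * (w * w) - (w - a) * (w - a) / 2 - (a * a + w * w) / 2) by (simpl; field).
  lra. Qed.

Lemma Fp_le q x Rr a w ex : 0 <= q -> 0 < x < Rr -> 0 < ex ->
  (2 * a * (- (q - x / 2) * a - w / 2) + 2 * w * a) * ex - (Rr + 1) * (a ^ 2 + w ^ 2) * ex <= 0.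
Proof. intros Hq Hx He. pose proof (bracket_le q x Rr a w Hq Hx). nra. Qed.

Lemma small_E we w1e eta eps C e : 0 < eps -> eta <= 1 -> eta <= eps / 4 -> 0 < eta ->
  Rabs we < eta -> Rabs w1e < eta -> 0 < C -> 0 < e -> (w1e ^ 2 + we ^ 2) * exp (- (C * e)) < eps.
Proof. intros. assert (Hexp : exp (- (C * e)) < 1).
  { rewrite <- exp_0. apply exp_increasing. nra. }
  pose proof (exp_pos (- (C * e))).
  rewrite <- (pow2_abs we), <- (pow2_abs w1e).
  pose proof (Rabs_pos we). pose proof (Rabs_pos w1e).
  assert (Rabs we ^ 2 <= eta * eta) by (simpl; nra).
  assert (Rabs w1e ^ 2 <= eta * eta) by (simpl; nra).
  assert (eta * eta <= eta) by nra.
  assert (0 <= Rabs w1e ^ 2 + Rabs we ^ 2) by nra.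
  nra. Qed.

Lemma E_zero a w ex : 0 < ex -> (a ^ 2 + w ^ 2) * ex <= 0 -> w = 0.
Proof. intros. assert (a ^ 2 + w ^ 2 <= 0) by nra.
  assert (0 <= a ^ 2) by apply pow2_ge_0. nra. Qed.

Theorem lemma6p8 (n : nat) (hn : (1 <= n)%nat) :
  exists sstar : R,
    0 < sstar /\ kummerM (-1/2) (INR n / 2) sstar = 0 /\
    (forall s, 0 < s -> kummerM (-1/2) (INR n / 2) s = 0 -> s = sstar) /\
    (exists (ell Rr : R) (U : R -> R), profile_solution n ell Rr U) /\
    (forall (ell Rr : R) (U : R -> R), profile_solution n ell Rr U ->
       Rr = 2 * sqrt sstar /\
       / ell = - sqrt (sstar / 2) * Derive (fun s => kummerM (-1/2) (INR n / 2) s) sstar /\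
       (forall r, 0 <= r <= Rr -> U r = ell * kummerM (-1/2) (INR n / 2) (r ^ 2 / 4))).
Proof.
  assert (Hn1 : 1 <= INR n) by (apply le_INR in hn; simpl in hn; lra).
  set (b := INR n / 2).
  assert (Hb0 : 1/2 <= b) by (unfold b; lra).
  assert (HK : forall s, kummerM (-1/2) b s = M b s) by (intros; apply kummer_PS; lra).
  destruct (M_zero b Hb0) as [ss [Hss HMs]].
  assert (Huniq : forall s, 0 < s -> M b s = 0 -> s = ss).
  { intros s Hs Hm. destruct (Rtotal_order s ss) as [Hlt|[Heq|Hgt]]; auto.
    - pose proof (M_decr b Hb0 s ss ltac:(lra) Hlt). lra.
    - pose proof (M_decr b Hb0 ss s ltac:(lra) Hgt). lra. }
  assert (HM1 : M1 b ss < 0).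
  { pose proof (M1_le b Hb0 ss ltac:(lra)). assert (0 < /(2*b)) by (apply Rinv_0_lt_compat; lra). lra. }
  assert (Hsq : 0 < sqrt ss) by (apply sqrt_lt_R0; lra).
  assert (Hsq2 : 0 < sqrt 2) by (apply sqrt_lt_R0; lra).
  assert (Hsd : sqrt (ss / 2) = sqrt ss / sqrt 2) by (apply sqrt_div_alt; lra).
  assert (HDer : Derive (fun s => kummerM (-1/2) b s) ss = M1 b ss).
  { rewrite (Derive_ext _ (M b)) by auto. apply is_derive_unique. apply M_der; auto. }
  assert (HVder : forall r, derivable_pt_lim (V b) r (V1 b r)) by (intros; apply is_derive_Reals; apply V_der; auto).
  assert (HV1der : forall r, derivable_pt_lim (V1 b) r (V2 b r)) by (intros; apply is_derive_Reals; apply V1_der; auto).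
  assert (HV0 : V b 0 = 1) by (unfold V; replace (0^2/4) with 0 by (simpl; field); apply M_0; auto).
  assert (HV10 : V1 b 0 = 0) by (unfold V1; replace (0/2) with 0 by field; ring).
  assert (HVR : forall Rr, Rr = 2 * sqrt ss -> V b Rr = 0 /\ V1 b Rr = M1 b ss * sqrt ss).
  { intros Rr ->. unfold V, V1. replace ((2 * sqrt ss)^2/4) with ss. split; auto. f_equal. field.
    simpl. replace (2 * sqrt ss * (2 * sqrt ss * 1)) with (4 * (sqrt ss * sqrt ss)) by ring.
    rewrite sqrt_sqrt by lra. field. }
  exists ss. split; auto. split; [rewrite HK; auto|]. split.
  { intros s Hs Hk. rewrite HK in Hk. auto. }
  split.
  -
    set (ell := / (- sqrt (ss/2) * M1 b ss)).
    assert (Hell : 0 < ell).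
    { unfold ell. apply Rinv_0_lt_compat. assert (0 < sqrt (ss/2)) by (apply sqrt_lt_R0; lra). nra. }
    set (Rr := 2 * sqrt ss).
    destruct (HVR Rr eq_refl) as [HVR0 HVR1].
    exists ell, Rr, (fun r => ell * V b r).
    unfold profile_solution.
    split; auto. split; [unfold Rr; lra|]. split.
    { intros r [Hr0 HrR]. apply Rmult_le_pos; [lra|]. unfold V.
      assert (Hr2 : r^2/4 <= ss).
      { unfold Rr in HrR. assert (r^2 <= (2*sqrt ss)^2) by (apply pow_incr; lra).
        replace ((2*sqrt ss)^2) with (4 * (sqrt ss * sqrt ss)) in H by ring.
        rewrite sqrt_sqrt in H by lra. lra. }
      destruct (Req_dec (r^2/4) ss) as [E|Ne]. { rewrite E, HMs; lra. }
      assert (0 <= r^2/4) by (assert (0 <= r^2) by (apply pow_le; lra); lra).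
      pose proof (M_decr b Hb0 (r^2/4) ss H ltac:(lra)). lra. }
    split.
    { apply cont_on_global. intros r. apply derivable_continuous_pt. exists (ell * V1 b r).
      apply (derivable_pt_lim_scal (V b) ell r). auto. }
    split.
    { exists (fun r => ell * V1 b r), (fun r => ell * V2 b r).
      split. { apply der_on_global. intros r. apply (derivable_pt_lim_scal (V b) ell r); auto. }
      split. { apply der_on_global. intros r. apply (derivable_pt_lim_scal (V1 b) ell r); auto. }
      split. { apply cont_on_global. intros r. apply (continuity_pt_scal (V2 b) ell r). apply V2_cont; auto. }
      split. { intros r Hr. pose proof (V_ode b Hb0 n r eq_refl ltac:(lra)).
        replace (ell * V2 b r + ((INR n - 1) / r - r / 2) * (ell * V1 b r) + ell * V b r / 2)
          with (ell * (V2 b r + ((INR n - 1) / r - r / 2) * V1 b r + V b r / 2)) by (field; lra).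
        rewrite H; ring. }
      split. { rewrite HV0; ring. }
      rewrite HV10; ring. }
    split. { rewrite HVR0; ring. }
    replace (- sqrt 2) with (ell * V1 b Rr).
    2: { rewrite HVR1. unfold ell. rewrite Hsd. field. repeat split; lra. }
    eapply filterlim_filter_le_1;
      [| apply (der_within (fun r => ell * V b r) Rr (ell * V1 b Rr) (fun _ => True))].
    { intros P HP. unfold within in *. eapply filter_imp; [|exact HP]. intros x Hx Hd. apply Hx. split; auto. lra. }
    apply (derivable_pt_lim_scal (V b) ell Rr); auto.
  -
    intros ell Rr U Hsol.
    destruct Hsol as [Hell [HRr [Hpos [Hcont [[U1 [U2 [HD1 [HD2 [HC2 [Hode [HU0 HU10]]]]]]] [HUR Hlim]]]]]].
    assert (Hint : forall r, 0 < r < Rr -> derivable_pt_lim U r (U1 r) /\ derivable_pt_lim U1 r (U2 r)).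
    { intros r Hr. assert (Hmp : 0 < Rmin r (Rr - r)) by (apply Rmin_pos; lra).
      pose proof (Rmin_l r (Rr - r)). pose proof (Rmin_r r (Rr - r)).
      split; eapply der_interior with (delta := Rmin r (Rr - r)); eauto;
      intros y Hy; apply Rabs_def2 in Hy; simpl; lra. }
    set (W := fun r => U r - ell * V b r).
    set (W1 := fun r => U1 r - ell * V1 b r).
    set (W2 := fun r => U2 r - ell * V2 b r).
    assert (HWd : forall r, 0 < r < Rr -> is_derive W r (W1 r) /\ is_derive W1 r (W2 r)).
    { intros r Hr. destruct (Hint r Hr) as [A1 A2]. split; apply is_derive_Reals.
      - exact (derivable_pt_lim_minus _ _ _ _ _ A1 (derivable_pt_lim_scal (V b) ell r _ (HVder r))).
      - exact (derivable_pt_lim_minus _ _ _ _ _ A2 (derivable_pt_lim_scal (V1 b) ell r _ (HV1der r))). }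
    assert (HWode : forall r, 0 < r < Rr -> W2 r + ((INR n - 1)/r - r/2) * W1 r + W r / 2 = 0).
    { intros r Hr. pose proof (Hode r Hr) as O1. pose proof (V_ode b Hb0 n r eq_refl ltac:(lra)) as O2.
      unfold W, W1, W2; cbv beta.
      transitivity ((U2 r + ((INR n - 1) / r - r / 2) * U1 r + U r / 2)
                    - ell * (V2 b r + ((INR n - 1) / r - r / 2) * V1 b r + V b r / 2)).
      lra. rewrite O1, O2. ring. }
    set (C := Rr + 1).
    set (F := fun x => (W1 x ^ 2 + W x ^ 2) * exp (- (C * x))).
    set (F' := fun x => (2 * W1 x * W2 x + 2 * W x * W1 x) * exp (- (C * x))
                        - C * (W1 x ^ 2 + W x ^ 2) * exp (- (C * x))).
    assert (HFd : forall x, 0 < x < Rr -> is_derive F x (F' x)).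
    { intros x Hx. destruct (HWd x Hx) as [A1 A2]. apply F_der; auto. }
    assert (HF' : forall x, 0 < x < Rr -> F' x <= 0).
    { intros x Hx. unfold F'. pose proof (HWode x Hx) as O.
      assert (Hq : 0 <= (INR n - 1) / x) by (apply Rdiv_le_0_compat; lra).
      set (q := (INR n - 1) / x) in *.
      assert (HW2 : W2 x = - (q - x / 2) * W1 x - W x / 2) by lra.
      rewrite HW2. apply Fp_le; auto. apply exp_pos. }
    assert (D0 : 0 <= 0 < Rr) by lra.
    assert (CWW : CW (fun r => 0 <= r < Rr) W 0).
    { exact (CW_sub _ U (fun x => ell * V b x) 0 (CW_der _ U U1 0 HD1 D0)
               (CW_scal _ (V b) ell 0 (CW_der _ (V b) (V1 b) 0 (der_on_global _ _ _ HVder) D0))). }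
    assert (CWW1 : CW (fun r => 0 <= r < Rr) W1 0).
    { exact (CW_sub _ U1 (fun x => ell * V1 b x) 0 (CW_der _ U1 U2 0 HD2 D0)
               (CW_scal _ (V1 b) ell 0 (CW_der _ (V1 b) (V2 b) 0 (der_on_global _ _ _ HV1der) D0))). }
    assert (HW00 : W 0 = 0) by (unfold W; rewrite HU0, HV0; ring).
    assert (HW10 : W1 0 = 0) by (unfold W1; rewrite HU10, HV10; ring).
    assert (HW : forall r, 0 < r < Rr -> W r = 0).
    { intros r Hr.
      assert (HFr : F r <= 0).
      { apply (nonincr_zero F F' Rr r Hr HFd HF').
        intros eps Heps. set (eta := Rmin 1 (eps / 4)).
        assert (Heta : 0 < eta) by (apply Rmin_pos; lra).
        pose proof (Rmin_l 1 (eps/4)) as Ee1. pose proof (Rmin_r 1 (eps/4)) as Ee2. fold eta in Ee1, Ee2.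
        destruct (CWW eta Heta) as [d1 [Hd1 K1]]. destruct (CWW1 eta Heta) as [d2 [Hd2 K2]].
        set (e := Rmin (r/2) (Rmin d1 d2 / 2)).
        assert (Hm : 0 < Rmin d1 d2) by (apply Rmin_pos; lra).
        pose proof (Rmin_l d1 d2). pose proof (Rmin_r d1 d2).
        assert (He : 0 < e) by (apply Rmin_pos; lra).
        pose proof (Rmin_l (r/2) (Rmin d1 d2 / 2)). pose proof (Rmin_r (r/2) (Rmin d1 d2 / 2)). fold e in H1, H2.
        exists e. split; [lra|].
        assert (De : 0 <= e < Rr) by lra.
        assert (Ae : Rabs (e - 0) < d1) by (rewrite Rminus_0_r, Rabs_right; lra).
        assert (Ae2 : Rabs (e - 0) < d2) by (rewrite Rminus_0_r, Rabs_right; lra).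
        specialize (K1 e De Ae). specialize (K2 e De Ae2).
        rewrite HW00, Rminus_0_r in K1. rewrite HW10, Rminus_0_r in K2.
        unfold F. apply (small_E _ _ eta); auto; unfold C; lra. }
      unfold F in HFr. exact (E_zero _ _ _ (exp_pos (- (C * r))) HFr). }
    assert (HUV : forall r, 0 <= r < Rr -> U r = ell * V b r).
    { intros r Hr. destruct (Req_dec r 0) as [->|Hr0]. { rewrite HU0, HV0; ring. }
      pose proof (HW r ltac:(lra)). unfold W in H. lra. }
    assert (DR : 0 <= Rr <= Rr) by lra.
    assert (HUVR : U Rr = ell * V b Rr).
    { apply (eq_at_end U (fun x => ell * V b x) Rr HRr).
      - apply CW_cont; auto.
      - apply CW_scal. eapply CW_der; [apply der_on_global; exact HVder | exact DR].
      - exact HUV. }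
    assert (HVR0 : V b Rr = 0) by (rewrite HUR in HUVR; nra).
    assert (HRs : Rr ^ 2 / 4 = ss).
    { apply Huniq. assert (0 < Rr^2) by (apply pow_lt; lra). lra. exact HVR0. }
    assert (HRr_eq : Rr = 2 * sqrt ss).
    { rewrite <- HRs. replace (Rr^2/4) with ((Rr/2)^2) by field. rewrite sqrt_pow2 by lra. field. }
    destruct (HVR Rr HRr_eq) as [_ HVR1].
    assert (Hl2 : filterlim (fun x => (U x - U Rr) / (x - Rr))
                   (within (fun x => 0 <= x < Rr) (locally Rr)) (locally (ell * V1 b Rr))).
    { apply filterlim_ext_loc with (fun x => (ell * V b x - ell * V b Rr) / (x - Rr)).
      { unfold within. apply filter_forall. intros x Hx. rewrite HUV by auto. rewrite HUVR. reflexivity. }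
      eapply filterlim_filter_le_1;
        [| apply (der_within (fun r => ell * V b r) Rr (ell * V1 b Rr) (fun _ => True))].
      { intros P HP. unfold within in *. eapply filter_imp; [|exact HP]. intros x Hx Hd. apply Hx. split; auto. lra. }
      apply (derivable_pt_lim_scal (V b) ell Rr); auto. }
    pose proof (lim_unique_left _ Rr _ _ HRr Hlim Hl2) as Heq.
    split; auto. split.
    + fold b. rewrite HDer. rewrite HVR1 in Heq. rewrite Hsd.
      replace (- (sqrt ss / sqrt 2) * M1 b ss) with (- (ell * (M1 b ss * sqrt ss)) / (sqrt 2 * ell)) by (field; lra).
      rewrite <- Heq. field. lra.
    + intros r Hr. fold b. rewrite HK. destruct (Req_dec r Rr) as [->|Hne].
      * rewrite HUVR. reflexivity.
      * rewrite HUV by lra. reflexivity.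
Qed.
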